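(* Let $F$ be a CNF formula over variables $x_1,\dots,x_n$ with clauses $C_1,\dots,C_m$, each containing two or three literals. Let $H=(V,A)$ be the 1-2-directed hypergraph constructed from $F$ as described in the context. Then $H$ contains an acyclic path from the node $\{\alpha,\beta\}$ to the node $\{c_{m+1},\gamma\}$ if and only if $F$ has a satisfying truth assignment.
   Context: **Triples and arcs.** A rooted triple $pq|o$, with $p,q,o$ distinct leaf labels and unordered in $p,q$, corresponds to the hyperarc $\mathrm{arc}(pq|o)= \{p,q\}\to\{\{p,o\},\{q,o\}\}$. Thus hypergraph nodes are unordered pairs of leaves; we write $pq$ for $\{p,q\}$. **Hypergraph notions.** A hyperarc $u\to\{v,v'\}$ has tail $u$ and heads $\{v,v'\}$. A path from $u_0$ to $u_\ell$ is a sequence $(a_1,\dots,a_\ell)$ of distinct hyperarcs with $\mathrm{t}(a_1)=u_0$, $u_\ell\in\mathrm{h}(a_\ell)$, and $\mathrm{t}(a_{k+1})\in\mathrm{h}(a_k)$ for all $k$. It is acyclic if no $a_k$ has a head equal to $\mathrm{t}(a_{k'})$ for some $k'<k$. **Construction.** Use leaves - $x_i^j,\bar x_i^j,y_i^j,\bar y_i^j$ for $i\in[n]$, $j\in[m]$; - $b_i,b'_i$ for $i\in[n+1]$; - $c_j,d_j$ for $j\in[m]$; - $c_{m+1}$, and $\alpha,\beta,\gamma$. The triple set $R$ is the union of the following groups. (i) Positive side of the gadget for each $i\in[n]$: - $b_ib'_i|x_i^1$ and $b'_ix_i^1|y_i^1$; - $x_i^jy_i^j|x_i^{j+1}$ and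 $y_i^jx_i^{j+1}|y_i^{j+1}$ for $1\le j\le m-1$; - $x_i^my_i^m|b_{i+1}$ and $y_i^mb_{i+1}|b'_{i+1}$. (ii) Negative side of the gadget for each $i\in[n]$: - $b_ib'_i|\bar x_i^1$ and $b'_i\bar x_i^1|\bar y_i^1$; - $\bar x_i^j\bar y_i^j|\bar x_i^{j+1}$ and $\bar y_i^j\bar x_i^{j+1}|\bar y_i^{j+1}$ for $1\le j\le m-1$; - $\bar x_i^m\bar y_i^m|b_{i+1}$ and $\bar x_i^mb_{i+1}|b'_{i+1}$. (iii) For each clause $C_j$: - for each positive occurrence of $x_i$ in $C_j$, the triples $c_jd_j|x_i^j$, $c_jx_i^j|y_i^j$, $c_jy_i^j|c_{j+1}$; - for each negative occurrence of $x_i$ in $C_j$, the triples $c_jd_j|\bar x_i^j$, $c_j\bar x_i^j|\bar y_i^j$, $c_j\bar y_i^j|c_{j+1}$; - if $j<m$, the triple $c_jc_{j+1}|d_{j+1}$. (iv) Connecting triples: $\alpha\beta|b_1$, $\beta b_1|b'_1$, $b_{n+1}b'_{n+1}|c_1$, $b'_{n+1}c_1|d_1$, $c_mc_{m+1}|\gamma$. Then $A=\{\mathrm{arc}(t):t\in R\}$, and $V$ is the set of all leaf pairs occurring as a tail or head of an arc in $A$. *)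

(* Defs.v *)
From HB Require Import structures.
From mathcomp Require Import all_boot.
From mathcomp Require Import finmap.

Set Implicit Arguments.
Unset Strict Implicit.
Unset Printing Implicit Defensive.

Local Open Scope fset_scope.

(* ---------- Leaf labels of the construction (indices are 1-based nats) ---------- *)
Inductive leaf : Type :=
  | LX  (i j : nat)
  | LXb (i j : nat)
  | LY  (i j : nat)
  | LYb (i j : nat)
  | LB  (i : nat)
  | LB' (i : nat)
  | LC  (j : nat)
  | LD  (j : nat)
  | LAlpha | LBeta | LGamma.

Definition leaf_enc (l : leaf) : nat * (nat * nat) :=
  match l with
  | LX i j => (0, (i, j)) | LXb i j => (1, (i, j))
  | LY i j => (2, (i, j)) | LYb i j => (3, (i, j))
  | LB i => (4, (i, 0)) | LB' i => (5, (i, 0))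
  | LC j => (6, (j, 0)) | LD j => (7, (j, 0))
  | LAlpha => (8, (0, 0)) | LBeta => (9, (0, 0)) | LGamma => (10, (0, 0))
  end.

Definition leaf_dec (t : nat * (nat * nat)) : option leaf :=
  match t with
  | (0, (i, j)) => Some (LX i j) | (1, (i, j)) => Some (LXb i j)
  | (2, (i, j)) => Some (LY i j) | (3, (i, j)) => Some (LYb i j)
  | (4, (i, _)) => Some (LB i) | (5, (i, _)) => Some (LB' i)
  | (6, (j, _)) => Some (LC j) | (7, (j, _)) => Some (LD j)
  | (8, _) => Some LAlpha | (9, _) => Some LBeta | (10, _) => Some LGamma
  | _ => None
  end.

Lemma leaf_encK : pcancel leaf_enc leaf_dec.
Proof. by case. Qed.

HB.instance Definition _ := Countable.copy leaf (pcan_type leaf_encK).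

Definition node := {fset leaf}.
Definition pr (p q : leaf) : node := [fset p; q].

Definition harc := (node * {fset node})%type.
Definition tl (a : harc) : node := a.1.
Definition hds (a : harc) : {fset node} := a.2.

(* A rooted triple pq|o, stored as (p, q, o). *)
Definition triple := (leaf * leaf * leaf)%type.

Definition arc (t : triple) : harc :=
  let: (p, q, o) := t in (pr p q, [fset pr p o; pr q o]).

(* A literal (i, true) is x_i, (i, false) is the negation of x_i.
   A formula is the list of its clauses C_1, ..., C_m (m = size F). *)
Definition literal := (nat * bool)%type.
Definition clause := seq literal.
Definition cnf := seq clause.

Definition wf_cnf (n : nat) (F : cnf) : Prop :=
  forall C, C \in F ->
    [/\ uniq C, (size C == 2) || (size C == 3)
      & forall l, l \in C -> 1 <= l.1 <= n].

Definition satisfies (v : nat -> bool) (F : cnf) : Prop :=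
  forall C, C \in F -> exists2 l, l \in C & v l.1 = l.2.

Section Construction.
Variables (n : nat) (F : cnf).
Let m := size F.

Definition pos_gadget (i : nat) : seq triple :=
  [:: (LB i, LB' i, LX i 1); (LB' i, LX i 1, LY i 1)]
  ++ flatten [seq [:: (LX i j, LY i j, LX i j.+1); (LY i j, LX i j.+1, LY i j.+1)]
             | j <- iota 1 (m - 1)]
  ++ [:: (LX i m, LY i m, LB i.+1); (LY i m, LB i.+1, LB' i.+1)].

Definition neg_gadget (i : nat) : seq triple :=
  [:: (LB i, LB' i, LXb i 1); (LB' i, LXb i 1, LYb i 1)]
  ++ flatten [seq [:: (LXb i j, LYb i j, LXb i j.+1); (LYb i j, LXb i j.+1, LYb i j.+1)]
             | j <- iota 1 (m - 1)]
  ++ [:: (LXb i m, LYb i m, LB i.+1); (LXb i m, LB i.+1, LB' i.+1)].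

Definition lit_triples (j : nat) (l : literal) : seq triple :=
  let: (i, b) := l in
  if b then [:: (LC j, LD j, LX i j); (LC j, LX i j, LY i j); (LC j, LY i j, LC j.+1)]
  else [:: (LC j, LD j, LXb i j); (LC j, LXb i j, LYb i j); (LC j, LYb i j, LC j.+1)].

Definition clause_triples (j : nat) : seq triple :=
  flatten [seq lit_triples j l | l <- nth [::] F j.-1]
  ++ (if j < m then [:: (LC j, LC j.+1, LD j.+1)] else [::]).

Definition connect_triples : seq triple :=
  [:: (LAlpha, LBeta, LB 1); (LBeta, LB 1, LB' 1);
      (LB n.+1, LB' n.+1, LC 1); (LB' n.+1, LC 1, LD 1);
      (LC m, LC m.+1, LGamma)].

Definition R : seq triple :=
  flatten [seq pos_gadget i | i <- iota 1 n]
  ++ flatten [seq neg_gadget i | i <- iota 1 n]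
  ++ flatten [seq clause_triples j | j <- iota 1 m]
  ++ connect_triples.

Definition A : seq harc := [seq arc t | t <- R].

Definition V : seq node := flatten [seq tl a :: hds a | a <- A].

End Construction.

Definition arc0 : harc := (fset0, fset0).

Definition is_path (Ar : seq harc) (s : seq harc) (u v : node) : Prop :=
  [/\ s != [::],
      all (fun a => a \in Ar) s /\ uniq s,
      tl (head arc0 s) = u,
      v \in hds (last arc0 s)
    & forall k, k.+1 < size s -> tl (nth arc0 s k.+1) \in hds (nth arc0 s k)].

Definition acyclic (s : seq harc) : Prop :=
  forall k k', k' < k -> k < size s ->
    tl (nth arc0 s k') \notin hds (nth arc0 s k).

(* Main.v *)
Require Import Defs.
From mathcomp Require Import all_boot finmap.
From mathcomp Require Import zify.
Require Import Defs.
From Stdlib Require Import ClassicalEpsilon.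
Set Implicit Arguments. Unset Strict Implicit. Unset Printing Implicit Defensive.
Local Open Scope fset_scope.

Lemma pr_inv a b c d : pr a b = pr c d -> (a = c /\ b = d) \/ (a = d /\ b = c).
Proof.
move=> E.
have ha : a \in pr c d by rewrite -E !inE eqxx.
have hb : b \in pr c d by rewrite -E !inE eqxx orbT.
have hc : c \in pr a b by rewrite E !inE eqxx.
have hd : d \in pr a b by rewrite E !inE eqxx orbT.
move: ha hb hc hd; rewrite !inE.
case/orP=>/eqP E1; case/orP=>/eqP E2; case/orP=>/eqP E3; case/orP=>/eqP E4; subst; auto.
Qed.

Definition lx (b : bool) i j := if b then LX i j else LXb i j.
Definition ly (b : bool) i j := if b then LY i j else LYb i j.
Definition lz (b : bool) i j := if b then LY i j else LXb i j.

Inductive TR (n : nat) (F : cnf) : triple -> Prop :=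
| TG1 (b : bool) (i : nat) : 1 <= i <= n -> TR n F (LB i, LB' i, lx b i 1)
| TG2 (b : bool) (i : nat) : 1 <= i <= n -> TR n F (LB' i, lx b i 1, ly b i 1)
| TG3 (b : bool) (i j : nat) : 1 <= i <= n -> 1 <= j < size F -> TR n F (lx b i j, ly b i j, lx b i j.+1)
| TG4 (b : bool) (i j : nat) : 1 <= i <= n -> 1 <= j < size F -> TR n F (ly b i j, lx b i j.+1, ly b i j.+1)
| TG5 (b : bool) (i : nat) : 1 <= i <= n -> TR n F (lx b i (size F), ly b i (size F), LB i.+1)
| TG6 (b : bool) (i : nat) : 1 <= i <= n -> TR n F (lz b i (size F), LB i.+1, LB' i.+1)
| TC1 (b : bool) (i j : nat) : 1 <= j <= size F -> (i, b) \in nth [::] F j.-1 -> TR n F (LC j, LD j, lx b i j)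
| TC2 (b : bool) (i j : nat) : 1 <= j <= size F -> (i, b) \in nth [::] F j.-1 -> TR n F (LC j, lx b i j, ly b i j)
| TC3 (b : bool) (i j : nat) : 1 <= j <= size F -> (i, b) \in nth [::] F j.-1 -> TR n F (LC j, ly b i j, LC j.+1)
| TC4 (j : nat) : 1 <= j < size F -> TR n F (LC j, LC j.+1, LD j.+1)
| TK1 : TR n F (LAlpha, LBeta, LB 1)
| TK2 : TR n F (LBeta, LB 1, LB' 1)
| TK3 : TR n F (LB n.+1, LB' n.+1, LC 1)
| TK4 : TR n F (LB' n.+1, LC 1, LD 1)
| TK5 : TR n F (LC (size F), LC (size F).+1, LGamma).

Lemma R_TR n F t : t \in R n F -> TR n F t.
Proof.
rewrite /R !mem_cat.
case/or4P.
- case/flatten_mapP => i; rewrite mem_iota => Hi.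
  rewrite /pos_gadget !mem_cat !inE.
  case/or3P.
  + by case/orP => /eqP ->; [apply: (@TG1 _ _ true) | apply: (@TG2 _ _ true)]; lia.
  + case/flatten_mapP => j; rewrite mem_iota => Hj; rewrite !inE.
    by case/orP => /eqP ->; [apply: (@TG3 _ _ true) | apply: (@TG4 _ _ true)]; lia.
  + by case/orP => /eqP ->; [apply: (@TG5 _ _ true) | apply: (@TG6 _ _ true)]; lia.
- case/flatten_mapP => i; rewrite mem_iota => Hi.
  rewrite /neg_gadget !mem_cat !inE.
  case/or3P.
  + by case/orP => /eqP ->; [apply: (@TG1 _ _ false) | apply: (@TG2 _ _ false)]; lia.
  + case/flatten_mapP => j; rewrite mem_iota => Hj; rewrite !inE.
    by case/orP => /eqP ->; [apply: (@TG3 _ _ false) | apply: (@TG4 _ _ false)]; lia.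
  + by case/orP => /eqP ->; [apply: (@TG5 _ _ false) | apply: (@TG6 _ _ false)]; lia.
- case/flatten_mapP => j; rewrite mem_iota => Hj.
  rewrite /clause_triples mem_cat; case/orP.
  + case/flatten_mapP => -[i b] Hl.
    by case: b Hl => Hl; rewrite /= !inE; case/or3P => /eqP ->;
      [apply: (@TC1 _ _ true) | apply: (@TC2 _ _ true) | apply: (@TC3 _ _ true)
      |apply: (@TC1 _ _ false) | apply: (@TC2 _ _ false) | apply: (@TC3 _ _ false)]; (lia || done).
  + case: ifP => // Hjm; rewrite inE => /eqP ->; apply: TC4; lia.
- rewrite /connect_triples !inE.
  by case/orP => [/eqP ->|]; [constructor|case/or4P => /eqP ->; constructor].
Qed.

Lemma TR_R n F t : TR n F t -> t \in R n F.
Proof.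
rewrite /R !mem_cat.
case=> [b i Hi|b i Hi|b i j Hi Hj|b i j Hi Hj|b i Hi|b i Hi|b i j Hj Hl|b i j Hj Hl|b i j Hj Hl|j Hj| | | | | ].
1-6: case: b; [apply/or4P; apply: Or41 | apply/or4P; apply: Or42].
1-12: apply/flatten_mapP; exists i; [rewrite mem_iota; lia|].
1-12: (try rewrite /pos_gadget); (try rewrite /neg_gadget); rewrite !mem_cat ?inE ?eqxx ?orbT //.
1-4: apply/or3P; apply: Or32; apply/flatten_mapP; exists j; [rewrite mem_iota; lia|].
1-4: by rewrite !inE eqxx ?orbT.
1-4: apply/or4P; apply: Or43; apply/flatten_mapP; exists j; [rewrite mem_iota; lia|];
  rewrite /clause_triples mem_cat.
1-3: apply/orP; left; apply/flatten_mapP; exists (i, b) => //; case: b Hl => Hl; by rewrite /= !inE eqxx ?orbT.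
- by apply/orP; right; (have ->: j < size F by lia); rewrite inE eqxx.
all: apply/or4P; apply: Or44; by rewrite /connect_triples !inE eqxx ?orbT.
Qed.

Ltac fin := first [ done | lia | (exists true; fin) | (exists false; fin) | (eexists; fin)
  | (split; fin) | (left; fin) | (right; fin) ].

Ltac invtac :=
  let Ht := fresh "Ht" in let Hin := fresh "Hin" in
  move=> Ht Hin; destruct Ht; rewrite /arc /hds /= !inE in Hin;
  repeat match goal with b : bool |- _ => destruct b end;
  simpl in *;
  case/orP: Hin => /eqP /pr_inv [[E1 E2]|[E1 E2]];
  inversion E1; inversion E2; subst; try fin.

Lemma N0 n F t : TR n F t -> pr (LC (size F).+1) LGamma \in hds (arc t) ->
  t = (LC (size F), LC (size F).+1, LGamma).
Proof. invtac. Qed.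

Lemma N1 n F t j : 1 <= j -> TR n F t -> pr (LC j) (LC j.+1) \in hds (arc t) ->
  exists i b, (i,b) \in nth [::] F j.-1 /\ t = (LC j, ly b i j, LC j.+1).
Proof. move=> Hj; invtac. Qed.

Lemma N2 n F t j b i : 1 <= j -> TR n F t -> pr (LC j) (ly b i j) \in hds (arc t) ->
  t = (LC j, lx b i j, ly b i j) /\ (i,b) \in nth [::] F j.-1.
Proof. move=> Hj; invtac. Qed.

Lemma N3 n F t j b i : TR n F t -> pr (LC j) (lx b i j) \in hds (arc t) ->
  t = (LC j, LD j, lx b i j).
Proof. invtac. Qed.

Lemma N4 n F t j : 1 <= j -> TR n F t -> pr (LC j) (LD j) \in hds (arc t) ->
  (j = 1 /\ t = (LB' n.+1, LC 1, LD 1)) \/ (1 < j /\ t = (LC j.-1, LC j, LD j)).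
Proof. move=> Hj; invtac. Qed.

Lemma N5 n F t : TR n F t -> pr (LB' n.+1) (LC 1) \in hds (arc t) ->
  t = (LB n.+1, LB' n.+1, LC 1).
Proof. invtac. Qed.

Lemma N6 n F t k : TR n F t -> pr (LB k) (LB' k) \in hds (arc t) ->
  (k = 1 /\ t = (LBeta, LB 1, LB' 1)) \/
  exists b i, t = (lz b i (size F), LB i.+1, LB' i.+1) /\ 1 <= i <= n /\ k = i.+1.
Proof. invtac. Qed.

Lemma N7 n F t b i : TR n F t -> pr (lz b i (size F)) (LB i.+1) \in hds (arc t) ->
  t = (lx b i (size F), ly b i (size F), LB i.+1).
Proof. invtac. Qed.

Lemma N8 n F t j b i : 1 <= j -> TR n F t -> pr (lx b i j) (ly b i j) \in hds (arc t) ->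
  (j = 1 /\ t = (LB' i, lx b i 1, ly b i 1)) \/ (1 < j /\ t = (ly b i j.-1, lx b i j, ly b i j))
  \/ t = (LC j, lx b i j, ly b i j).
Proof. move=> Hj; invtac. Qed.

Lemma N9 n F t j b i : TR n F t -> pr (ly b i j) (lx b i j.+1) \in hds (arc t) ->
  t = (lx b i j, ly b i j, lx b i j.+1).
Proof. invtac. Qed.

Lemma N10 n F t b i : TR n F t -> pr (LB' i) (lx b i 1) \in hds (arc t) ->
  t = (LB i, LB' i, lx b i 1).
Proof. invtac. Qed.

Lemma N11 n F t : TR n F t -> pr LBeta (LB 1) \in hds (arc t) ->
  t = (LAlpha, LBeta, LB 1).
Proof. invtac. Qed.

Definition erel (W : leaf -> nat) : rel triple := fun t t' =>
  [&& tl (arc t') \in hds (arc t), W t.2 < W t'.2, W t'.1.1 < W t'.2 & W t'.1.2 < W t'.2].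

Lemma eI (W : leaf -> nat) p q o p' q' o' :
  pr p' q' \in [fset pr p o; pr q o] -> W o < W o' -> W p' < W o' -> W q' < W o' ->
  erel W (p, q, o) (p', q', o').
Proof. by move=> *; apply/and4P; split. Qed.

Lemma G (W : leaf -> nat) x P : path (erel W) x P ->
  [/\ uniq (map arc P), acyclic (map arc P) &
      forall k, k.+1 < size P -> tl (arc (nth x P k.+1)) \in hds (arc (nth x P k))].
Proof.
move=> Hp.
have He : forall k, k < size P -> erel W (nth x (x :: P) k) (nth x P k) by apply/(pathP x).
have Hloc : forall k, k < size P -> W (nth x P k).1.1 < W (nth x P k).2 /\ W (nth x P k).1.2 < W (nth x P k).2.
  by move=> k /He /and4P [_ _ ? ?].
have Hs : sorted (fun t t' : triple => W t.2 < W t'.2) P.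
  by apply: (@path_sorted _ _ x); apply: sub_path Hp => t t' /and4P [].
have Hinc : forall k' k, k' < k -> k < size P -> W (nth x P k').2 < W (nth x P k).2.
  move=> k' k Hk' Hk.
  have := sorted_ltn_nth (leT := fun t t' : triple => W t.2 < W t'.2) _ x Hs.
  move=> /(_ _) H; apply: H => //; [move=> a b c; apply: ltn_trans | rewrite inE; lia].
split.
- apply/(uniqP arc0) => k' k; rewrite !inE size_map => Hk' Hk.
  rewrite !(nth_map x) //.
  wlog Hlt : k k' Hk Hk' / k' < k.
    move=> Hw E; case: (ltngtP k' k) => // Hc; [exact: Hw E | symmetry; exact: Hw (esym E)].
  move=> E; exfalso.
  have := Hinc _ _ Hlt Hk; have := Hloc _ Hk'; have := Hloc _ Hk.
  move: E; case: (nth x P k) => [[p q] o]; case: (nth x P k') => [[p' q'] o'] E.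
  have : pr q o \in hds (arc (p, q, o)) by rewrite /= !inE eqxx orbT.
  rewrite -E /= !inE => /orP [] /eqP /pr_inv [[E1 E2]|[E1 E2]]; subst => /=; lia.
- move=> k k' Hk'k; rewrite size_map => Hk.
  rewrite !(nth_map x) ?(ltn_trans Hk'k) //.
  have := Hinc _ _ Hk'k Hk; have := Hloc _ (ltn_trans Hk'k Hk); have := Hloc _ Hk.
  case: (nth x P k) => [[p q] o]; case: (nth x P k') => [[p' q'] o'] /=.
  move=> H1 H2 H3; apply/negP; rewrite !inE => /orP [] /eqP /pr_inv [[E1 E2]|[E1 E2]]; subst; lia.
- by move=> k Hk; have /and4P [] := He _ Hk.
Qed.
Local Close Scope fset_scope.

Definition Bw (m i : nat) := (2 * m + 2) * i.

Definition W (n m : nat) (v : nat -> bool) (l : leaf) : nat :=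
  let K := Bw m n.+1 in
  match l with
  | LX i j => if v i then K + 4 * j else Bw m i + 2 * j
  | LY i j => if v i then K + 4 * j + 1 else Bw m i + 2 * j + 1
  | LXb i j => if v i then Bw m i + 2 * j else K + 4 * j
  | LYb i j => if v i then Bw m i + 2 * j + 1 else K + 4 * j + 1
  | LB i => Bw m i
  | LB' i => Bw m i + 1
  | LC j => K + 4 * j - 2
  | LD j => K + 4 * j - 1
  | LAlpha => 0
  | LBeta => 1
  | LGamma => K + 4 * m.+1 - 1
  end.

Lemma WX n m v i j : W n m v (lx (~~ v i) i j) = Bw m i + 2 * j.
Proof. by rewrite /lx; case E: (v i) => /=; rewrite E. Qed.
Lemma WY n m v i j : W n m v (ly (~~ v i) i j) = Bw m i + 2 * j + 1.
Proof. by rewrite /ly; case E: (v i) => /=; rewrite E. Qed.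
Lemma WZ n m v i j : W n m v (lz (~~ v i) i j) <= Bw m i + 2 * j + 1.
Proof. by rewrite /lz; case E: (v i) => /=; rewrite E; lia. Qed.
Lemma WXc n m v i j b : v i = b -> W n m v (lx b i j) = Bw m n.+1 + 4 * j.
Proof. by rewrite /lx => <-; case E: (v i) => /=; rewrite E. Qed.
Lemma WYc n m v i j b : v i = b -> W n m v (ly b i j) = Bw m n.+1 + 4 * j + 1.
Proof. by rewrite /ly => <-; case E: (v i) => /=; rewrite E. Qed.

Definition sel (F : cnf) (v : nat -> bool) j : literal :=
  nth (0, true) (nth [::] F j.-1) (find (fun l : literal => v l.1 == l.2) (nth [::] F j.-1)).

Lemma sel_ok F v j : satisfies v F -> 1 <= j <= size F ->
  sel F v j \in nth [::] F j.-1 /\ v (sel F v j).1 = (sel F v j).2.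
Proof.
move=> Hs Hj.
have HC : nth [::] F j.-1 \in F by apply: mem_nth; case: j Hj => [|j'] /andP [].
have [l Hl Hv] := Hs _ HC.
have Hh : has (fun l : literal => v l.1 == l.2) (nth [::] F j.-1) by apply/hasP; exists l => //; apply/eqP.
split; first by rewrite /sel mem_nth // -has_find.
by apply/eqP; have := nth_find (0, true) Hh.
Qed.

Fixpoint chain b i j k : seq triple :=
  match k with
  | 0 => [::]
  | k'.+1 => (lx b i j, ly b i j, lx b i j.+1) :: (ly b i j, lx b i j.+1, ly b i j.+1) :: chain b i j.+1 k'
  end.

Definition gad m (v : nat -> bool) i : seq triple :=
  (LB i, LB' i, lx (~~ v i) i 1) :: (LB' i, lx (~~ v i) i 1, ly (~~ v i) i 1) ::
  chain (~~ v i) i 1 m.-1 ++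
  [:: (lx (~~ v i) i m, ly (~~ v i) i m, LB i.+1); (lz (~~ v i) i m, LB i.+1, LB' i.+1)].

Arguments gad : simpl never.

Fixpoint gads m v i k : seq triple :=
  match k with 0 => [::] | k'.+1 => gad m v i ++ gads m v i.+1 k' end.

Definition cl F v j : seq triple :=
  let l := sel F v j in
  (LC j, LD j, lx l.2 l.1 j) :: (LC j, lx l.2 l.1 j, ly l.2 l.1 j) :: (LC j, ly l.2 l.1 j, LC j.+1) ::
  (if j < size F then [:: (LC j, LC j.+1, LD j.+1)] else [::]).

Fixpoint cls F v j k : seq triple :=
  match k with 0 => [::] | k'.+1 => cl F v j ++ cls F v j.+1 k' end.

Definition PP n F v : seq triple :=
  (LAlpha, LBeta, LB 1) :: (LBeta, LB 1, LB' 1) :: gads (size F) v 1 n ++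
  (LB n.+1, LB' n.+1, LC 1) :: (LB' n.+1, LC 1, LD 1) :: cls F v 1 (size F) ++
  [:: (LC (size F), LC (size F).+1, LGamma)].

Ltac hin := rewrite ?inE ?eqxx ?orbT //.

Lemma chain_path n m v i k : forall j x,
  pr (lx (~~ v i) i j) (ly (~~ v i) i j) \in hds (arc x) -> W n m v x.2 = Bw m i + 2 * j + 1 ->
  let c := chain (~~ v i) i j k in
  [/\ path (erel (W n m v)) x c,
      pr (lx (~~ v i) i (j + k)) (ly (~~ v i) i (j + k)) \in hds (arc (last x c)) &
      W n m v (last x c).2 = Bw m i + 2 * (j + k) + 1].
Proof.
elim: k => [|k IH] j x Hh Hw /=; first by rewrite !addn0.
have [P1 P2 P3] := IH j.+1 (ly (~~ v i) i j, lx (~~ v i) i j.+1, ly (~~ v i) i j.+1) ltac:(hin)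
  ltac:(rewrite /= WY; lia).
rewrite addSnnS in P2 P3; split => //.
apply/andP; split.
  case: x Hh Hw => [[p q] o] Hh /= Hw; apply/and4P; split => //=; rewrite ?WX ?WY; lia.
apply/andP; split => //.
apply: eI; [hin | rewrite /= ?WX ?WY; lia ..].
Qed.

Lemma BwS m i : Bw m i.+1 = Bw m i + 2 * m + 2.
Proof. rewrite /Bw mulnS; lia. Qed.

Lemma gad_path n m v i x : 0 < m ->
  pr (LB i) (LB' i) \in hds (arc x) -> W n m v x.2 = Bw m i + 1 ->
  path (erel (W n m v)) x (gad m v i) /\
  last x (gad m v i) = (lz (~~ v i) i m, LB i.+1, LB' i.+1).
Proof.
move=> Hm Hh Hw.
have [C1 C2 C3] := @chain_path n m v i m.-1 1 (LB' i, lx (~~ v i) i 1, ly (~~ v i) i 1)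
  ltac:(hin) ltac:(rewrite /= WY; lia).
rewrite add1n prednK // in C2 C3.
rewrite /gad /= cat_path last_cat /=; split => //.
apply/and4P; split => //.
- case: x Hh Hw => [[p q] o] Hh /= Hw; apply: eI => //=; rewrite ?WX; lia.
- apply: eI; [hin | rewrite /= ?WX ?WY; lia ..].
- move: C2 C3; case: (last _ _) => [[p q] o] C2 /= C3.
  rewrite !andbT; apply/andP; split.
    apply: eI => //=; rewrite ?WX ?WY ?BwS; lia.
  apply: eI.
  + rewrite /lz /lx /ly; case: (v i) => /=; hin.
  + rewrite /= BwS; lia.
  + have := @WZ n m v i m; rewrite /= BwS; lia.
  + rewrite /= BwS; lia.
Qed.

Lemma gads_path n m v k : 0 < m -> forall i x,
  pr (LB i) (LB' i) \in hds (arc x) -> W n m v x.2 = Bw m i + 1 ->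
  let c := gads m v i k in
  [/\ path (erel (W n m v)) x c, pr (LB (i + k)) (LB' (i + k)) \in hds (arc (last x c)) &
      W n m v (last x c).2 = Bw m (i + k) + 1].
Proof.
move=> Hm; elim: k => [|k IH] i x Hh Hw; first by rewrite /= !addn0.
have [G1 G2] := @gad_path n m v i x Hm Hh Hw.
have [P1 P2 P3] := IH i.+1 (lz (~~ v i) i m, LB i.+1, LB' i.+1) ltac:(hin) ltac:(by []).
rewrite addSnnS in P2 P3.
cbv zeta; have -> : gads m v i k.+1 = gad m v i ++ gads m v i.+1 k by [].
by rewrite cat_path last_cat G1 G2.
Qed.

Arguments cl : simpl never.

Lemma cls_path n F v k : satisfies v F -> forall j x, 1 <= j -> j + k = (size F).+1 -> 0 < k ->
  pr (LC j) (LD j) \in hds (arc x) -> W n (size F) v x.2 = Bw (size F) n.+1 + 4 * j - 1 ->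
  let c := cls F v j k in
  [/\ path (erel (W n (size F) v)) x c,
      pr (LC (size F)) (LC (size F).+1) \in hds (arc (last x c)) &
      W n (size F) v (last x c).2 = Bw (size F) n.+1 + 4 * (size F).+1 - 2].
Proof.
move=> Hs; elim: k => [|k IH] j x Hj Hjk Hk Hh Hw //.
cbv zeta; have -> : cls F v j k.+1 = cl F v j ++ cls F v j.+1 k by [].
have [Hmem Hv] := @sel_ok F v j Hs ltac:(lia).
rewrite cat_path last_cat /cl.
move: Hmem Hv; case: (sel F v j) => i b /= Hmem Hv.
have E1 : erel (W n (size F) v) x (LC j, LD j, lx b i j).
  case: x Hh Hw => [[p q] o] Hh /= Hw; apply: eI => //=; rewrite ?(WXc _ _ _ Hv); lia.
have E2 : erel (W n (size F) v) (LC j, LD j, lx b i j) (LC j, lx b i j, ly b i j).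
  apply: eI; [hin | rewrite /= ?(WXc _ _ _ Hv) ?(WYc _ _ _ Hv); lia ..].
have E3 : erel (W n (size F) v) (LC j, lx b i j, ly b i j) (LC j, ly b i j, LC j.+1).
  apply: eI; [hin | rewrite /= ?(WXc _ _ _ Hv) ?(WYc _ _ _ Hv); lia ..].
case: (ltnP j (size F)) => Hjm.
- have E4 : erel (W n (size F) v) (LC j, ly b i j, LC j.+1) (LC j, LC j.+1, LD j.+1).
    apply: eI; [hin | rewrite /=; lia ..].
  have [P1 P2 P3] := IH j.+1 (LC j, LC j.+1, LD j.+1) ltac:(lia) ltac:(lia) ltac:(lia) ltac:(hin)
    ltac:(rewrite /=; lia).
  by rewrite /= E1 E2 E3 E4.
- have -> : k = 0 by lia.
  have Ej : size F = j by lia.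
  rewrite /= E1 E2 E3 Ej /=; split; [done | hin | lia].
Qed.

Lemma chain_TR n F b i k : 1 <= i <= n -> forall j t, 1 <= j -> j + k <= size F ->
  t \in chain b i j k -> TR n F t.
Proof.
move=> Hi; elim: k => [|k IH] j t Hj Hjk //=.
rewrite !inE => /orP [/eqP -> | /orP [/eqP -> | H]].
- apply: TG3 => //; lia.
- apply: TG4 => //; lia.
- apply: (IH j.+1) => //; lia.
Qed.

Lemma gads_TR n F v k : 0 < size F -> forall i t, 1 <= i -> i + k <= n.+1 ->
  t \in gads (size F) v i k -> TR n F t.
Proof.
move=> Hm; elim: k => [|k IH] i t Hi Hik //.
have -> : gads (size F) v i k.+1 = gad (size F) v i ++ gads (size F) v i.+1 k by [].
rewrite mem_cat => /orP [|H]; last by apply: (IH i.+1) => //; lia.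
rewrite /gad !inE mem_cat !inE => /orP [/eqP -> | /orP [/eqP -> | /orP [H | /orP [/eqP -> | /eqP ->]]]].
- apply: TG1; lia.
- apply: TG2; lia.
- apply: (@chain_TR n F (~~ v i) i (size F).-1 _ 1 t _ _ H); lia.
- apply: TG5; lia.
- apply: TG6; lia.
Qed.

Lemma cls_TR n F v k : satisfies v F -> forall j t, 1 <= j -> j + k <= (size F).+1 ->
  t \in cls F v j k -> TR n F t.
Proof.
move=> Hs; elim: k => [|k IH] j t Hj Hjk //.
have -> : cls F v j k.+1 = cl F v j ++ cls F v j.+1 k by [].
rewrite mem_cat => /orP [|H]; last by apply: (IH j.+1) => //; lia.
have [Hmem Hv] := @sel_ok F v j Hs ltac:(lia).
rewrite /cl; move: Hmem Hv; case: (sel F v j) => i b /= Hmem Hv.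
rewrite !inE => /orP [/eqP -> | /orP [/eqP -> | /orP [/eqP -> | H]]].
- apply: TC1 => //; lia.
- apply: TC2 => //; lia.
- apply: TC3 => //; lia.
- move: H; case: ifP => // Hjm; rewrite inE => /eqP ->; apply: TC4; lia.
Qed.

Lemma PP_TR n F v t : 0 < size F -> satisfies v F -> t \in PP n F v -> TR n F t.
Proof.
move=> Hm Hs; rewrite /PP !inE mem_cat !inE mem_cat !inE.
case/orP => [/eqP -> | ]; first exact: TK1.
case/orP => [/eqP -> | ]; first exact: TK2.
case/orP => [H | ]; first by apply: (@gads_TR n F v n Hm 1 t) => //; lia.
case/orP => [/eqP -> | ]; first exact: TK3.
case/orP => [/eqP -> | ]; first exact: TK4.
case/orP => [H | /eqP ->]; last exact: TK5.
by apply: (@cls_TR n F v (size F) Hs 1 t) => //; lia.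
Qed.

Lemma if_dir n F v : 0 < size F -> satisfies v F ->
  exists s, is_path (A n F) s (pr LAlpha LBeta) (pr (LC (size F).+1) LGamma) /\ acyclic s.
Proof.
move=> Hm Hs.
set x0 : triple := (LGamma, LAlpha, LBeta).
have Hpath : path (erel (W n (size F) v)) x0 (PP n F v).
  have [G1 G2 G3] := @gads_path n (size F) v n Hm 1 (LBeta, LB 1, LB' 1) ltac:(hin) ltac:(by []).
  have EC : erel (W n (size F) v) (last (LBeta, LB 1, LB' 1) (gads (size F) v 1 n)) (LB n.+1, LB' n.+1, LC 1).
    move: G2 G3; rewrite add1n; case: (last _ _) => [[p q] o] G2 /= G3; apply: eI => //=; lia.
  have ED : erel (W n (size F) v) (LB n.+1, LB' n.+1, LC 1) (LB' n.+1, LC 1, LD 1).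
    apply: eI; [hin | rewrite /=; lia ..].
  have [C1 C2 C3] := @cls_path n F v (size F) Hs 1 (LB' n.+1, LC 1, LD 1) (leqnn 1) ltac:(lia) Hm ltac:(hin)
    ltac:(rewrite /=; lia).
  have EE : erel (W n (size F) v) (last (LB' n.+1, LC 1, LD 1) (cls F v 1 (size F)))
      (LC (size F), LC (size F).+1, LGamma).
    move: C2 C3; case: (last _ _) => [[p q] o] C2 /= C3; apply: eI => //=; lia.
  rewrite /PP /= cat_path /= G1 EC ED cat_path C1 /= EE !andbT.
  apply/andP; split; apply: eI => //=; rewrite ?inE ?eqxx ?orbT //= /Bw; lia.
have [Hu Hac Hl] := G Hpath.
exists (map arc (PP n F v)); split => //.
split => //.
- split => //; apply/allP => a /mapP [t Ht ->]; apply: map_f; apply: TR_R.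
  exact: PP_TR Ht.
- have HL : forall (t : triple) l, last arc0 (map arc (t :: l)) = arc (last t l).
    by move=> t l; rewrite map_cons /= last_map.
  rewrite /PP HL /= last_cat /= last_cat /=; hin.
- move=> k; rewrite size_map => Hk; rewrite !(nth_map x0) //; [exact: Hl | lia].
Qed.

Definition tgt (F : cnf) := pr (LC (size F).+1) LGamma.

Ltac nab := let E := fresh in move=> E; case/pr_inv: E => [[E1 E2]|[E1 E2]];
  repeat match goal with b : bool |- _ => destruct b end; simpl in *; discriminate.

Lemma TR_noself n F t : TR n F t -> tl (arc t) \notin hds (arc t).
Proof.
move=> Ht; apply/negP; destruct Ht; rewrite /arc /tl /hds /= !inE => Hin;
  repeat match goal with b : bool |- _ => destruct b end; simpl in *;
  case/orP: Hin => /eqP /pr_inv [[E1 E2]|[E1 E2]]; inversion E1; inversion E2; lia.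
Qed.

Lemma inA n F s k : all (fun a => a \in A n F) s -> k < size s ->
  exists t, TR n F t /\ nth arc0 s k = arc t.
Proof.
move/allP => H Hk; have /mapP [t Ht ->] := H _ (mem_nth arc0 Hk).
by exists t; split => //; apply: R_TR.
Qed.

Lemma back n F s k w : is_path (A n F) s (pr LAlpha LBeta) (tgt F) ->
  k < size s -> tl (nth arc0 s k) = w -> w <> pr LAlpha LBeta ->
  exists t k', [/\ TR n F t, k = k'.+1, nth arc0 s k' = arc t & w \in hds (arc t)].
Proof.
case=> _ [Hall _] Hhd _ Hlink; case: k => [|k] Hk Hw Hne.
  by move: Hw; rewrite nth0 Hhd => Hw; case: Hne.
have [t [Ht Et]] := inA Hall (ltnW Hk).
by exists t, k; split => //; rewrite -Et -Hw; apply: Hlink.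
Qed.

Lemma tails_uniq n F s : is_path (A n F) s (pr LAlpha LBeta) (tgt F) -> acyclic s ->
  forall k1 k2, k1 < size s -> k2 < size s -> tl (nth arc0 s k1) = tl (nth arc0 s k2) -> k1 = k2.
Proof.
move=> Hp Hac.
have H : forall k1 k2, k1 < k2 -> k2 < size s -> tl (nth arc0 s k1) = tl (nth arc0 s k2) -> False.
  move=> k1 k2 H12 Hk2 E.
  case: Hp => _ [Hall _] _ _ Hlink.
  case: k2 H12 Hk2 E => [//|k] H12 Hk E.
  have := Hlink k Hk; rewrite -E.
  case: (ltngtP k1 k) => Hc; first by move: (Hac k k1 Hc (ltnW Hk)) => /negP.
  - lia.
  - subst k1; have [t [Ht ->]] := inA Hall (ltnW Hk).
    by move/negP: (TR_noself Ht).
move=> k1 k2 H1 H2 E; case: (ltngtP k1 k2) => // Hc; exfalso.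
- exact: H Hc H2 E.
- exact: H Hc H1 (esym E).
Qed.

Lemma lemC n F s : is_path (A n F) s (pr LAlpha LBeta) (tgt F) ->
  forall j, 1 <= j -> forall k, k < size s -> tl (nth arc0 s k) = pr (LC j) (LD j) ->
  exists2 k', k' < k & tl (nth arc0 s k') = pr (LB n.+1) (LB' n.+1).
Proof.
move=> Hp; elim=> [//|j IH] _ k Hk Hw.
have [t [k1 [Ht Ek Ea Hin]]] := back Hp Hk Hw ltac:(nab); subst k.
case: (N4 (isT : 0 < j.+1) Ht Hin) => [[Ej Et]|[Ej Et]].
- have Hw1 : tl (nth arc0 s k1) = pr (LB' n.+1) (LC 1) by rewrite Ea Et.
  have [t2 [k2 [Ht2 Ek2 Ea2 Hin2]]] := back Hp (ltnW Hk) Hw1 ltac:(nab); subst k1.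
  have Et2 := N5 Ht2 Hin2.
  by exists k2 => //; rewrite Ea2 Et2.
- have Hw1 : tl (nth arc0 s k1) = pr (LC j) (LC j.+1) by rewrite Ea Et.
  have [t2 [k2 [Ht2 Ek2 Ea2 Hin2]]] := back Hp (ltnW Hk) Hw1 ltac:(nab); subst k1.
  have [i [b [Hmem Et2]]] := N1 (ltac:(lia) : 1 <= j) Ht2 Hin2.
  have Hw2 : tl (nth arc0 s k2) = pr (LC j) (ly b i j) by rewrite Ea2 Et2.
  have [t3 [k3 [Ht3 Ek3 Ea3 Hin3]]] := back Hp (ltac:(lia) : k2 < size s) Hw2 ltac:(nab); subst k2.
  have [Et3 _] := N2 (ltac:(lia) : 1 <= j) Ht3 Hin3.
  have Hw3 : tl (nth arc0 s k3) = pr (LC j) (lx b i j) by rewrite Ea3 Et3.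
  have [t4 [k4 [Ht4 Ek4 Ea4 Hin4]]] := back Hp (ltac:(lia) : k3 < size s) Hw3 ltac:(nab); subst k3.
  have Et4 := N3 Ht4 Hin4.
  have Hw4 : tl (nth arc0 s k4) = pr (LC j) (LD j) by rewrite Ea4 Et4.
  have [k' Hk' Hw'] := IH (ltac:(lia)) k4 (ltac:(lia)) Hw4.
  by exists k' => //; lia.
Qed.

Lemma phaseA n F s : is_path (A n F) s (pr LAlpha LBeta) (tgt F) ->
  forall d, d < size F -> exists2 r, r < size s &
    tl (nth arc0 s r) = pr (LC (size F - d)) (LC (size F - d).+1).
Proof.
move=> Hp; elim=> [|d IH] Hd.
- have Hp' := Hp; case: Hp' => Hne [Hall _] _ Hlast _.
  have Hs0 : 0 < size s by rewrite lt0n size_eq0.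
  have Hs : (size s).-1 < size s by lia.
  have [t [Ht Et]] := inA Hall Hs.
  rewrite nth_last in Et; rewrite Et in Hlast.
  have Et2 := N0 Ht Hlast.
  by exists (size s).-1 => //; rewrite nth_last Et Et2 subn0.
- have [r Hr Hw] := IH (ltnW Hd).
  have E : size F - d = (size F - d.+1).+1 by lia.
  rewrite E in Hw; set j := size F - d.+1 in Hw *.
  have Hj : 1 <= j by rewrite /j; lia.
  have [t [k1 [Ht Ek Ea Hin]]] := back Hp Hr Hw ltac:(nab); subst r.
  have [i [b [Hmem Et]]] := N1 (isT : 0 < j.+1) Ht Hin.
  have Hw1 : tl (nth arc0 s k1) = pr (LC j.+1) (ly b i j.+1) by rewrite Ea Et.
  have [t2 [k2 [Ht2 Ek2 Ea2 Hin2]]] := back Hp (ltnW Hr) Hw1 ltac:(nab); subst k1.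
  have [Et2 _] := N2 (isT : 0 < j.+1) Ht2 Hin2.
  have Hw2 : tl (nth arc0 s k2) = pr (LC j.+1) (lx b i j.+1) by rewrite Ea2 Et2.
  have [t3 [k3 [Ht3 Ek3 Ea3 Hin3]]] := back Hp (ltac:(lia) : k2 < size s) Hw2 ltac:(nab); subst k2.
  have Et3 := N3 Ht3 Hin3.
  have Hw3 : tl (nth arc0 s k3) = pr (LC j.+1) (LD j.+1) by rewrite Ea3 Et3.
  have [t4 [k4 [Ht4 Ek4 Ea4 Hin4]]] := back Hp (ltac:(lia) : k3 < size s) Hw3 ltac:(nab); subst k3.
  case: (N4 (isT : 0 < j.+1) Ht4 Hin4) => [[Ej Et4]|[Ej Et4]]; first by lia.
  by exists k4; [lia | rewrite Ea4 Et4].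
Qed.

Lemma phaseA2 n F s : is_path (A n F) s (pr LAlpha LBeta) (tgt F) ->
  forall j, 1 <= j <= size F -> exists i b r', [/\ (i, b) \in nth [::] F j.-1, r' < size s,
    nth arc0 s r' = arc (LC j, lx b i j, ly b i j) &
    exists2 p, p < r' & tl (nth arc0 s p) = pr (LB n.+1) (LB' n.+1)].
Proof.
move=> Hp j Hj.
have [r Hr Hw] := phaseA Hp (ltac:(lia) : size F - j < size F).
have E : size F - (size F - j) = j by lia.
rewrite E in Hw.
have [t [k1 [Ht Ek Ea Hin]]] := back Hp Hr Hw ltac:(nab); subst r.
have [i [b [Hmem Et]]] := N1 (ltac:(lia) : 1 <= j) Ht Hin.
have Hw1 : tl (nth arc0 s k1) = pr (LC j) (ly b i j) by rewrite Ea Et.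
have [t2 [k2 [Ht2 Ek2 Ea2 Hin2]]] := back Hp (ltnW Hr) Hw1 ltac:(nab); subst k1.
have [Et2 _] := N2 (ltac:(lia) : 1 <= j) Ht2 Hin2.
have Hw2 : tl (nth arc0 s k2) = pr (LC j) (lx b i j) by rewrite Ea2 Et2.
have [t3 [k3 [Ht3 Ek3 Ea3 Hin3]]] := back Hp (ltac:(lia) : k2 < size s) Hw2 ltac:(nab); subst k2.
have Et3 := N3 Ht3 Hin3.
have Hw3 : tl (nth arc0 s k3) = pr (LC j) (LD j) by rewrite Ea3 Et3.
have [p Hp1 Hp2] := lemC Hp (ltac:(lia) : 1 <= j) (ltac:(lia) : k3 < size s) Hw3.
exists i, b, k3.+1; split => //; [lia | by rewrite Ea2 Et2 | exists p => //; lia].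
Qed.

Lemma chainB n F s p0 : is_path (A n F) s (pr LAlpha LBeta) (tgt F) -> acyclic s ->
  p0 < size s -> tl (nth arc0 s p0) = pr (LB n.+1) (LB' n.+1) ->
  forall b i j, 1 <= j -> forall k, k < p0 -> tl (nth arc0 s k) = pr (lx b i j) (ly b i j) ->
  (forall j', 1 <= j' <= j -> exists2 k', k' < p0 & tl (nth arc0 s k') = pr (lx b i j') (ly b i j'))
  /\ exists2 k', k' < k & tl (nth arc0 s k') = pr (LB i) (LB' i).
Proof.
move=> Hp Hac Hp0 Hw0 b i; elim=> [//|j IH] _ k Hk Hw.
have Hks : k < size s by lia.
have [t [k1 [Ht Ek Ea Hin]]] := back Hp Hks Hw ltac:(nab); subst k.
case: (N8 (isT : 0 < j.+1) Ht Hin) => [[Ej Et]|[[Ej Et]|Et]].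
- have Hw1 : tl (nth arc0 s k1) = pr (LB' i) (lx b i 1) by rewrite Ea Et.
  have [t2 [k2 [Ht2 Ek2 Ea2 Hin2]]] := back Hp (ltac:(lia) : k1 < size s) Hw1 ltac:(nab); subst k1.
  have Et2 := N10 Ht2 Hin2.
  split; last by exists k2 => //; rewrite Ea2 Et2.
  move=> j' Hj'; exists k2.+2 => //; have -> : j' = j.+1 by lia.
  exact: Hw.
- have Hw1 : tl (nth arc0 s k1) = pr (ly b i j) (lx b i j.+1) by rewrite Ea Et.
  have [t2 [k2 [Ht2 Ek2 Ea2 Hin2]]] := back Hp (ltac:(lia) : k1 < size s) Hw1 ltac:(nab); subst k1.
  have Et2 := N9 Ht2 Hin2.
  have Hw2 : tl (nth arc0 s k2) = pr (lx b i j) (ly b i j) by rewrite Ea2 Et2.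
  have [IH1 [k' Hk' Hw']] := IH (ltac:(lia)) k2 (ltac:(lia)) Hw2.
  split; last by exists k' => //; lia.
  move=> j' Hj'; case: (ltnP j' j.+1) => Hc; first by apply: IH1; lia.
  exists k2.+2 => //; have -> : j' = j.+1 by lia.
  exact: Hw.
- have Hw1 : tl (nth arc0 s k1) = pr (LC j.+1) (lx b i j.+1) by rewrite Ea Et.
  have [t2 [k2 [Ht2 Ek2 Ea2 Hin2]]] := back Hp (ltac:(lia) : k1 < size s) Hw1 ltac:(nab); subst k1.
  have Et2 := N3 Ht2 Hin2.
  have Hw2 : tl (nth arc0 s k2) = pr (LC j.+1) (LD j.+1) by rewrite Ea2 Et2.
  have [p Hp1 Hp2] := lemC Hp (isT : 0 < j.+1) (ltac:(lia) : k2 < size s) Hw2.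
  have := tails_uniq Hp Hac (ltac:(lia) : p < size s) Hp0; rewrite Hp2 Hw0 => /(_ erefl).
  lia.
Qed.

Definition Side (F : cnf) (s : seq harc) (p0 : nat) (b : bool) (i : nat) := forall j, 1 <= j <= size F ->
  exists2 k, k < p0 & tl (nth arc0 s k) = pr (lx b i j) (ly b i j).

Lemma gadgetB n F s p0 : 0 < size F -> is_path (A n F) s (pr LAlpha LBeta) (tgt F) -> acyclic s ->
  p0 < size s -> tl (nth arc0 s p0) = pr (LB n.+1) (LB' n.+1) ->
  forall i, i <= n -> forall q, q <= p0 -> tl (nth arc0 s q) = pr (LB i.+1) (LB' i.+1) ->
  forall i', 1 <= i' <= i -> exists b, Side F s p0 b i'.
Proof.
move=> Hm Hp Hac Hp0 Hw0; elim=> [|i IH] Hi q Hq Hw i' Hi'; first by lia.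
have Hqs : q < size s by lia.
have [t [k1 [Ht Ek Ea Hin]]] := back Hp Hqs Hw ltac:(nab); subst q.
case: (N6 Ht Hin) => [[Ek Et]|[b [i0 [Et [Hi0 Ek]]]]]; first by lia.
case: Ek => Ei0; subst i0.
have Hw1 : tl (nth arc0 s k1) = pr (lz b i.+1 (size F)) (LB i.+2) by rewrite Ea Et.
have [t2 [k2 [Ht2 Ek2 Ea2 Hin2]]] := back Hp (ltac:(lia) : k1 < size s) Hw1 ltac:(nab); subst k1.
have Et2 := N7 Ht2 Hin2.
have Hw2 : tl (nth arc0 s k2) = pr (lx b i.+1 (size F)) (ly b i.+1 (size F)) by rewrite Ea2 Et2.
have [C1 [k' Hk' Hw']] := chainB Hp Hac Hp0 Hw0 Hm (ltac:(lia) : k2 < p0) Hw2.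
case: (ltnP i' i.+1) => Hc.
- apply: (IH (ltac:(lia)) k' (ltac:(lia)) Hw'); lia.
- have -> : i' = i.+1 by lia.
  by exists b.
Qed.

Lemma only_if n F s : 0 < size F -> wf_cnf n F ->
  is_path (A n F) s (pr LAlpha LBeta) (tgt F) -> acyclic s -> exists v, satisfies v F.
Proof.
move=> Hm Hwf Hp Hac.
have [i1 [b1 [r1 [_ Hr1 _ [p0 Hp0r Hp0]]]]] := phaseA2 Hp (ltac:(lia) : 1 <= 1 <= size F).
have Hp0s : p0 < size s by lia.
have HB := gadgetB Hm Hp Hac Hp0s Hp0 (leqnn n) (leqnn p0) Hp0.
pose v i := if excluded_middle_informative (Side F s p0 true i) then false else true.
exists v => C HC.
set j := (index C F).+1.
have Hj : 1 <= j <= size F by rewrite /j index_mem HC.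
have EC : nth [::] F j.-1 = C by rewrite /j /= nth_index.
have [i [b [r' [Hmem Hr' Ea [p Hpr Hpw]]]]] := phaseA2 Hp Hj.
rewrite EC in Hmem; exists (i, b) => //=.
have Ep : p = p0 by apply: (tails_uniq Hp Hac) => //; [lia | rewrite Hpw Hp0].
subst p.
have HnS : ~ Side F s p0 b i.
  move=> HS; have [k Hk Hkw] := HS j Hj.
  have := Hac r' k (ltac:(lia)) Hr'; rewrite Ea Hkw /= !inE eqxx orbT.
  by [].
have [_ _ Hl] := Hwf C HC.
have Hi := Hl _ Hmem.
have [b' Hb'] := HB i Hi.
rewrite /v; case: excluded_middle_informative => HT.
- by case: b HnS {Hmem Ea Hi Hl} => // /(_ HT).
- case: b HnS {Hmem Ea Hi Hl} => // HnS; exfalso.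
  by case: b' Hb' => Hb'; [apply: HT | apply: HnS].
Qed.

Theorem lemma1 (n : nat) (F : cnf) :
  0 < size F -> wf_cnf n F ->
  ((exists s : seq harc,
      is_path (A n F) s (pr LAlpha LBeta) (pr (LC (size F).+1) LGamma) /\ acyclic s)
   <-> exists v : nat -> bool, satisfies v F).
Proof.
move=> Hm Hwf; split.
- by case=> s [Hp Hac]; apply: (only_if Hm Hwf Hp Hac).
- by case=> v Hv; exact: (@if_dir n F v Hm Hv).
Qed.
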